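(* Let $\alpha\in(0,1)$, $\epsilon>0$, $b>0$, fix a prior $\rho$ and secrets $s_i,s_j$, and let $\pi$ be a coupling of $P_{X|s_i,\rho}$ and $P_{X|s_j,\rho}$. Let $Y=X+N$ with $N\sim\mathrm{Lap}(b)$ (density $\frac{1}{2b}e^{-|z|/b}$) independent of $(X,S)$. If $$\int e^{-\alpha\frac{|x-x'|}{b}}\,\mathrm{d}\pi(x,x')\ \ge\ e^{(\alpha-1)\epsilon},$$ then $D_\alpha(P_{Y|s_i,\rho}\,\|\,P_{Y|s_j,\rho})\le\epsilon$.
   Context: Setting: a sensitive secret $S$ and real-valued data $X$; for each secret value $s$ and prior belief $\rho$, $X$ given $S=s$ has a density $P_{X|s,\rho}$ on $\mathbb{R}$. The released data $Y=X+N$ has conditional density $P_{Y|S}(y|s,\rho)=\int P_N(y-x)P_{X|S}(x|s,\rho)\,\mathrm{d}x$. For densities $P,Q$ the Rényi divergence of order $\alpha\in(0,1)$ is $D_\alpha(P\|Q)=\frac{1}{\alpha-1}\log\int P(y)^\alpha Q(y)^{1-\alpha}\,\mathrm{d}y$. A coupling of two distributions on $\mathbb{R}$ is a joint distribution on $\mathbb{R}^2$ having them as marginals. *)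

(* Defs.v *)
From HB Require Import structures.
From mathcomp Require Import all_boot all_order all_algebra.
From mathcomp Require Import all_classical all_reals all_analysis.
Set Implicit Arguments. Unset Strict Implicit. Unset Printing Implicit Defensive.
Import Order.TTheory GRing.Theory Num.Theory.
Local Open Scope classical_set_scope.
Local Open Scope ring_scope.

Definition lap_density {R : realType} (b : R) (z : R) : R :=
  (2 * b)^-1 * expR (- `|z| / b).

Definition is_density {R : realType} (p : R -> R) : Prop :=
  measurable_fun setT p /\ (forall x, 0 <= p x) /\
  (\int[@lebesgue_measure R]_(x in setT) (p x)%:E = 1)%E.

(* density of Y = X + N, N with density pN independent of X with density pX *)
Definition conv_density {R : realType} (pN pX : R -> R) (y : R) : R :=
  Rintegral (@lebesgue_measure R) setT (fun x => pN (y - x) * pX x).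

Definition renyi_div {R : realType} (alpha : R) (P Q : R -> R) : R :=
  (alpha - 1)^-1 * ln (Rintegral (@lebesgue_measure R) setT
                         (fun y => P y `^ alpha * Q y `^ (1 - alpha))).

Definition is_coupling {R : realType} (pi : probability (R * R)%type R)
    (p q : R -> R) : Prop :=
  (forall A : set R, measurable A ->
     pi (A `*` setT) = (\int[@lebesgue_measure R]_(x in A) (p x)%:E)%E) /\
  (forall A : set R, measurable A ->
     pi (setT `*` A) = (\int[@lebesgue_measure R]_(x in A) (q x)%:E)%E).

(* Main.v *)
Require Import Defs.
From HB Require Import structures.
From mathcomp Require Import all_boot all_order all_algebra.
From mathcomp Require Import all_classical all_reals all_analysis.
From mathcomp Require Import measurable_realfun ring lra.
Import Order.TTheory GRing.Theory Num.Theory.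
Import numFieldNormedType.Exports.
Local Open Scope classical_set_scope.
Local Open Scope ring_scope.

Section lap.
Context {R : realType}.
Variable b : R.
Hypothesis b0 : 0 < b.
Local Notation L := (lap_density b).
Local Notation mu := (@lebesgue_measure R).

Lemma lap_gt0 z : 0 < L z.
Proof. by rewrite /lap_density mulr_gt0 ?expR_gt0 // invr_gt0 mulr_gt0. Qed.

Lemma lap_le z : L z <= (2 * b)^-1.
Proof.
rewrite /lap_density; apply: ler_piMr; first by rewrite invr_ge0 mulr_ge0 // ltW.
by rewrite expR_le1 mulNr oppr_le0 divr_ge0 // ltW.
Qed.

Lemma lap_cont : continuous (L : R -> R).
Proof.
move=> x; rewrite /lap_density.
apply: (@continuousM _ R^o (fun=> (2 * b)^-1) (fun z => expR (- `|z| / b))).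
  exact: cst_continuous.
apply: continuous_comp; last exact: continuous_expR.
apply: (@continuousM _ R^o (fun z => - `|z|) (fun=> b^-1)); last exact: cst_continuous.
apply: (@continuousN _ R^o); exact: norm_continuous.
Qed.

Lemma lap_meas : measurable_fun setT L.
Proof. exact: continuous_measurable_fun lap_cont. Qed.

Lemma lap_shift y x x' : L (y - x') * expR (- `|x - x'| / b) <= L (y - x).
Proof.
rewrite /lap_density -mulrA ler_pM2l ?invr_gt0 ?mulr_gt0 //.
rewrite -expRD ler_expR -mulrDl ler_pM2r ?invr_gt0 // -opprD lerN2.
have -> : y - x = (y - x') + (x' - x) by rewrite addrA subrK.
apply: (le_trans (ler_normD _ _)); by rewrite [`|x' - x|]distrC.
Qed.

Lemma lap_half : (\int[mu]_(x in `[0%R, +oo[) (L x)%:E = (2^-1)%:E)%E.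
Proof.
rewrite integral_mkcond.
transitivity (\int[mu]_x ((2^-1)%:E * (exponential_pdf (b^-1) x)%:E))%E.
  apply: eq_integral => x _; rewrite restrict_EFin -EFinM; congr EFin.
  rewrite /exponential_pdf /patch; case: ifPn => H; last by rewrite mulr0.
  move: H; rewrite inE/= in_itv/= andbT => H.
  rewrite /lap_density ger0_norm // invfM -mulrA; congr (_ * (_ * expR _)).
  by rewrite !mulNr mulrC.
transitivity ((2^-1)%:E * \int[mu]_x (exponential_pdf b^-1 x)%:E)%E; last first.
  by rewrite integral_exponential_pdf ?invr_gt0 // mule1.
apply: ge0_integralZl => //.
- apply/measurable_EFinP; exact: measurable_exponential_pdf.
- by move=> x _; rewrite lee_fin exponential_pdf_ge0 // invr_ge0 ltW.
Qed.

Lemma lap_neg : (\int[mu]_(x in `]-oo, 0%R[) (L x)%:E = (2^-1)%:E)%E.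
Proof.
rewrite integral_itv_bndo_bndc; last first.
  apply/measurable_EFinP; apply: measurable_funTS; exact: lap_meas.
have := ge0_integration_by_substitutionNy (G := L) (a := 0).
rewrite oppr0 => ->.
- rewrite -lap_half; apply: eq_integral => x _ /=.
  by rewrite /lap_density normrN.
- exact: continuous_subspaceT lap_cont.
- by move=> x _; exact/ltW/lap_gt0.
Qed.

Lemma lap_int0 : (\int[mu]_x (L x)%:E = 1)%E.
Proof.
rewrite -(setUv `[0%R, +oo[%classic) ge0_integral_setU//=; last 4 first.
- exact: measurableC.
- rewrite setUv; apply/measurable_EFinP; exact: lap_meas.
- by move=> x _; rewrite lee_fin; exact/ltW/lap_gt0.
- exact/disj_setPCl.
rewrite setCitvr lap_half lap_neg -EFinD; congr EFin.
by rewrite -div1r -splitr.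
Qed.


Lemma lap_int c : (\int[mu]_x (L (x - c))%:E = 1)%E.
Proof.
have dF : (fun x : R => x - c)^`()%classic = cst 1.
  apply/funext => x; rewrite derive1E deriveB // derive_id derive_cst subr0 //.
rewrite -(lap_int0); symmetry.
rewrite (@increasing_ge0_integration_by_substitutionT _ (fun x => x - c) L).
- by apply: eq_integral => x _; rewrite dF /= mulr1.
- by move=> x y xy; rewrite ltrBlDr subrK.
- rewrite dF; exact: cst_continuous.
- rewrite dF; exact: is_cvg_cst.
- rewrite dF; exact: is_cvg_cst.
- by move=> x; apply: derivableB.
- apply/cvgrNyPle => A; near=> x.
  rewrite lerBlDr; near: x; apply: nbhs_ninfty_le; exact: num_real.
- apply/cvgryPge => A; near=> x.
  rewrite lerBrDr; near: x; apply: nbhs_pinfty_ge; exact: num_real.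
- exact: lap_cont.
- by move=> x; exact/ltW/lap_gt0.
Unshelve. all: end_near. Qed.

End lap.

Section amgm.
Context {R : realType}.
Variable al : R.
Hypothesis al0 : 0 < al.
Hypothesis al1 : al < 1.

Lemma amgm a c : 0 < a -> 0 < c -> a `^ al * c `^ (1 - al) <= al * a + (1 - al) * c.
Proof.
move=> a0 c0.
rewrite /powR (gt_eqF a0) (gt_eqF c0) -expRD.
have := convex_expR (Itv01 (ltW al0) (ltW al1)) (ln a) (ln c).
rewrite !convRE /= !lnK ?posrE //.
Qed.

Lemma jensen_pt u v U V : 0 < u -> 0 < v -> 0 < U -> 0 < V ->
  u `^ al * v `^ (1 - al) <=
  U `^ al * V `^ (1 - al) * (al * (u / U) + (1 - al) * (v / V)).
Proof.
move=> u0 v0 U0 V0.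
have [a a0 ->] : exists2 a, 0 < a & u = a * U.
  by exists (u / U); rewrite ?divr_gt0 // divfK // gt_eqF.
have [c c0 ->] : exists2 c, 0 < c & v = c * V.
  by exists (v / V); rewrite ?divr_gt0 // divfK // gt_eqF.
rewrite (powRM _ (ltW a0) (ltW U0)) (powRM _ (ltW c0) (ltW V0)) !mulfK ?gt_eqF //.
rewrite mulrACA [X in X <= _]mulrC ler_pM2l ?mulr_gt0 ?powR_gt0 //.
exact: amgm.
Qed.
End amgm.

Section dens.
Local Open Scope ereal_scope.
Context d (T : measurableType d) (R : realType).
Variables (nu mu : {measure set T -> \bar R}) (gr : T -> R).
Hypothesis mgr : measurable_fun setT gr.
Hypothesis gr0 : forall x, (0 <= gr x)%R.
Hypothesis nuE : forall A, measurable A -> nu A = \int[mu]_(x in A) (gr x)%:E.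
Import HBNNSimple.

Lemma density_change f E : (forall x, 0 <= f x) ->
    measurable E -> measurable_fun E f ->
  \int[mu]_(x in E) (f x * (gr x)%:E) = \int[nu]_(x in E) f x.
Proof.
move=> f0 mE mf; set g := EFin \o gr.
have mg : measurable_fun setT g by exact/measurable_EFinP.
pose h := nnsfun_approx mE mf.
have -> : \int[nu]_(x in E) f x =
    lim (\int[nu]_(x in E) (EFin \o h n) x @[n --> \oo]).
  have fE x : E x -> f x = lim ((EFin \o h n) x @[n --> \oo]).
    by move=> Ex; apply/esym/cvg_lim => //; exact: cvg_nnsfun_approx.
  under eq_integral => x /[!inE] /fE -> //.
  apply: monotone_convergence => //.
  - move=> n; apply/measurable_EFinP.
    by apply: (measurable_funS measurableT) => //; exact/measurable_funP.
  - by move=> n x Ex //=; rewrite lee_fin.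
  - by move=> x Ex a b ab; rewrite lee_fin; exact/lefP/nd_nnsfun_approx.
have -> : \int[mu]_(x in E) (f x * (gr x)%:E) =
    lim (\int[mu]_(x in E) ((EFin \o h n) \* g) x @[n --> \oo]).
  have fg x : E x -> f x * g x = lim (((EFin \o h n) \* g) x @[n --> \oo]).
    by move=> Ex; apply/esym/cvg_lim => //; apply: cvgeZr;
      [by []|exact: cvg_nnsfun_approx].
  under eq_integral => x /[!inE] /fg -> //.
  apply: monotone_convergence => [//| | |].
  - move=> n; apply/emeasurable_funM; apply/measurable_funTS.
      exact/measurable_EFinP.
    exact: mg.
  - by move=> n x Ex /=; rewrite mule_ge0 ?lee_fin.
  - by move=> x Ex a b ab/=; rewrite lee_wpmul2r ?lee_fin//; exact/lefP/nd_nnsfun_approx.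
suff suf n : \int[mu]_(x in E) ((EFin \o h n) x * g x) =
    \int[nu]_(x in E) (EFin \o h n) x.
  by under eq_fun do rewrite suf.
transitivity (\int[nu]_(x in E)
   (\sum_(y \in range (h n)) (y * \1_(h n @^-1` [set y]) x)%:E)); last first.
  by apply: eq_integral => t tE; rewrite /= fimfunE -fsumEFin.
have indich m r : measurable_fun E (fun x => (r * \1_(h m @^-1` [set r]) x)%:E).
  by apply: (measurable_comp measurableT) => //; exact: measurable_funM.
rewrite ge0_integral_fsum//; last by move=> m y Ey; exact: nnfun_muleindic_ge0.
transitivity (\int[mu]_(x in E) (\sum_(y \in range (h n))
    (y * \1_(h n @^-1` [set y]) x)%:E * g x)).
  under [RHS]eq_integral => x xE.
    rewrite -ge0_mule_fsuml => [|y]; last exact: nnfun_muleindic_ge0.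
    rewrite fsumEFin // -(fimfunE _ x); over.
  by [].
rewrite ge0_integral_fsum//; last 2 first.
  - move=> y; apply: emeasurable_funM => //; apply: measurable_funTS.
    exact: mg.
  - by move=> m y Ey; apply: mule_ge0; [exact: nnfun_muleindic_ge0|rewrite lee_fin].
apply: eq_fsbigr => r rhn.
under [RHS]eq_integral do rewrite EFinM.
rewrite integralZl_indic_nnsfun => //.
under eq_integral do rewrite EFinM -muleA.
rewrite ge0_integralZl//.
- under eq_integral do rewrite muleC.
  rewrite (eq_integral (g \_ (h n @^-1` [set r]))); last first.
    by move=> x xE; rewrite epatch_indic.
  by rewrite -integral_mkcondr -nuE// integral_indic// setIC.
- apply: emeasurable_funM; first exact/measurable_EFinP.
  exact/measurable_funTS/mg.
- by move=> t Et; rewrite mule_ge0 ?lee_fin.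
- by move: rhn; rewrite inE => -[t _ <-]; rewrite lee_fin.
Qed.
End dens.

Section marg.
Local Open Scope ereal_scope.
Context (R : realType).
Local Notation mu := (@lebesgue_measure R).
Variables (pi : probability (R * R)%type R) (p q : R -> R).
Hypothesis cpl : is_coupling pi p q.
Hypothesis dp : is_density p.
Hypothesis dq : is_density q.

Lemma marg1 (f : R -> \bar R) : (forall x, 0 <= f x) -> measurable_fun setT f ->
  \int[pi]_z f z.1 = \int[mu]_x (f x * (p x)%:E).
Proof.
move=> f0 mf.
rewrite (@density_change _ (measurableTypeR R) _ (pushforward pi (fst : R * R -> measurableTypeR R)) mu p) //; last 3 first.
- by case: dp.
- by case: dp => _ [].
- move=> A mA; rewrite /pushforward /= -(cpl.1 A mA); congr (pi _).
  by apply/seteqP; split => z /=; [move=> Az; split|case].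
by rewrite ge0_integral_pushforward.
Qed.

Lemma marg2 (f : R -> \bar R) : (forall x, 0 <= f x) -> measurable_fun setT f ->
  \int[pi]_z f z.2 = \int[mu]_x (f x * (q x)%:E).
Proof.
move=> f0 mf.
rewrite (@density_change _ (measurableTypeR R) _ (pushforward pi (snd : R * R -> measurableTypeR R)) mu q) //; last 3 first.
- by case: dq.
- by case: dq => _ [].
- move=> A mA; rewrite /pushforward /= -(cpl.2 A mA); congr (pi _).
  by apply/seteqP; split => z /=; [move=> Az; split|case].
by rewrite ge0_integral_pushforward.
Qed.
End marg.

Section main.
Local Open Scope ereal_scope.
Context (R : realType).
Local Notation mu := (@lebesgue_measure R).
Variables (al eps b : R) (pi : probability (R * R)%type R) (p q : R -> R).
Hypothesis al0 : (0 < al)%R.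
Hypothesis al1 : (al < 1)%R.
Hypothesis b0 : (0 < b)%R.
Hypothesis cpl : is_coupling pi p q.
Hypothesis dp : is_density p.
Hypothesis dq : is_density q.
Local Notation L := (lap_density b).

Lemma measL y : measurable_fun setT (fun x : R => (L (y - x))%:E).
Proof.
apply/measurable_EFinP; apply: measurableT_comp; first exact: lap_meas.
exact: measurable_funB.
Qed.

Lemma int_pi_L_fin (g : R * R -> R) : measurable_fun setT g ->
  0 <= \int[pi]_z (L (g z))%:E <= ((2 * b)^-1)%:E.
Proof.
move=> mg.
apply/andP; split; first by apply: integral_ge0 => z _; rewrite lee_fin ltW ?lap_gt0.
apply: (le_trans (y := \int[pi]_z (cst ((2 * b)^-1)%:E) z)).
  apply: ge0_le_integral => //.
  - by move=> z _; rewrite lee_fin ltW ?lap_gt0.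
  - by apply/measurable_EFinP; apply: measurableT_comp => //; exact: lap_meas.
  - by move=> z _; rewrite lee_fin lap_le.
rewrite integral_cst //.
by rewrite [X in _ * X](_ : _ = 1) ?mule1 //; exact: probability_setT.
Qed.


Lemma PE y : (conv_density L p y)%:E = \int[pi]_z (L (y - z.1))%:E.
Proof.
have E1 : \int[pi]_z (L (y - z.1))%:E = \int[mu]_x (L (y - x) * p x)%:E.
  rewrite (@marg1 R pi p q cpl dp (fun x => (L (y - x))%:E)) //.
  - by move=> x; rewrite lee_fin ltW ?lap_gt0.
  - exact: measL.
have /andP[h0 h1] := int_pi_L_fin (fun z => (y - z.1)%R) (measurable_funB (measurable_cst _) measurable_fst).
rewrite /conv_density /Rintegral -E1 fineK // ge0_fin_numE //.
exact: (le_lt_trans h1 (ltry _)).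
Qed.

Lemma QE y : (conv_density L q y)%:E = \int[pi]_z (L (y - z.2))%:E.
Proof.
have E1 : \int[pi]_z (L (y - z.2))%:E = \int[mu]_x (L (y - x) * q x)%:E.
  rewrite (@marg2 R pi p q cpl dq (fun x => (L (y - x))%:E)) //.
  - by move=> x; rewrite lee_fin ltW ?lap_gt0.
  - exact: measL.
have /andP[h0 h1] := int_pi_L_fin (fun z => (y - z.2)%R) (measurable_funB (measurable_cst _) measurable_snd).
rewrite /conv_density /Rintegral -E1 fineK // ge0_fin_numE //.
exact: (le_lt_trans h1 (ltry _)).
Qed.


Lemma int_pi_L_pos (g : R * R -> R) : measurable_fun setT g ->
  0 < \int[pi]_z (L (g z))%:E.
Proof.
move=> mg.
have /andP[h0 _] := int_pi_L_fin _ mg.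
rewrite lt_neqAle h0 andbT; apply/negP => /eqP/esym h.
have mf : measurable_fun setT (fun z => (L (g z))%:E).
  by apply/measurable_EFinP; apply: measurableT_comp => //; exact: lap_meas.
have : \int[pi]_z `|(L (g z))%:E| = 0.
  rewrite -h; apply: eq_integral => z _; rewrite gee0_abs // lee_fin ltW ?lap_gt0 //.
move/(ae_eq_integral_abs _ measurableT mf) => [N [mN piN sN]].
have sT : setT `<=` N.
  move=> z _; apply: sN => /= /(_ I) /eqP; rewrite eqe; apply/negP.
  by rewrite gt_eqF ?lap_gt0.
have := le_measure pi (mem_set measurableT) (mem_set mN) sT.
rewrite [X in _ <= X](_ : _ = 0) //.
rewrite [X in X <= _](_ : _ = 1) ?lee_fin ?ler10 //.
have := probability_setT pi; apply.
Qed.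


Let mu1 y : measurable_fun setT (fun z : R * R => L (y - z.1)).
Proof. apply: measurableT_comp; [exact: lap_meas|exact: measurable_funB]. Qed.
Let mu2 y : measurable_fun setT (fun z : R * R => L (y - z.2)).
Proof. apply: measurableT_comp; [exact: lap_meas|exact: measurable_funB]. Qed.

Lemma int_lin (c1 c2 : R) (u v : R * R -> R) : (0 <= c1)%R -> (0 <= c2)%R ->
  measurable_fun setT u -> measurable_fun setT v ->
  (forall z, 0 <= u z)%R -> (forall z, 0 <= v z)%R ->
  \int[pi]_z (c1 * u z + c2 * v z)%:E =
  c1%:E * \int[pi]_z (u z)%:E + c2%:E * \int[pi]_z (v z)%:E.
Proof.
move=> c10 c20 mu_ mv u0 v0.
rewrite -(ge0_integralZl_EFin _ _ _ _ c10) //; last 2 first.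
  by move=> z _; rewrite lee_fin.
  exact/measurable_EFinP.
rewrite -(ge0_integralZl_EFin _ _ _ _ c20) //; last 2 first.
  by move=> z _; rewrite lee_fin.
  exact/measurable_EFinP.
rewrite -ge0_integralD //.
- by move=> z _; rewrite -EFinM lee_fin mulr_ge0.
- by apply: emeasurable_funM => //; exact/measurable_EFinP.
- by move=> z _; rewrite -EFinM lee_fin mulr_ge0.
- by apply: emeasurable_funM => //; exact/measurable_EFinP.
Qed.


Lemma jensen_y y :
  \int[pi]_z (L (y - z.1) `^ al * L (y - z.2) `^ (1 - al))%:E <=
  ((conv_density L p y) `^ al * (conv_density L q y) `^ (1 - al))%:E.
Proof.
set U := conv_density L p y; set V := conv_density L q y.
have U0 : (0 < U)%R.
  rewrite -lte_fin PE.
  exact: int_pi_L_pos (fun z => (y - z.1)%R) (measurable_funB (measurable_cst _) measurable_fst).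
have V0 : (0 < V)%R.
  rewrite -lte_fin QE.
  exact: int_pi_L_pos (fun z => (y - z.2)%R) (measurable_funB (measurable_cst _) measurable_snd).
set K := (U `^ al * V `^ (1 - al))%R.
have K0 : (0 <= K)%R by rewrite mulr_ge0 ?powR_ge0.
apply: (le_trans (y := \int[pi]_z ((K * al / U) * L (y - z.1) + (K * (1 - al) / V) * L (y - z.2))%:E)).
  apply: ge0_le_integral => //.
  - by move=> z _; rewrite lee_fin mulr_ge0 ?powR_ge0.
  - apply/measurable_EFinP; apply: measurable_funM.
      exact: measurableT_comp (measurable_powR _) (mu1 y).
    exact: measurableT_comp (measurable_powR _) (mu2 y).
  - apply/measurable_EFinP; apply: measurable_funD; apply: measurable_funM => //.
  - move=> z _; rewrite lee_fin.
    have := @jensen_pt R al al0 al1 _ _ _ _ (@lap_gt0 R b b0 (y - z.1)%R) (@lap_gt0 R b b0 (y - z.2)%R) U0 V0.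
    rewrite -/K => h; apply: (le_trans h).
    rewrite le_eqVlt; apply/orP; left; apply/eqP.
    by field; rewrite ?gt_eqF.
rewrite int_lin //; last 4 first.
- by apply: divr_ge0; [apply: mulr_ge0 => //; exact: ltW|exact: ltW].
- by apply: divr_ge0; [apply: mulr_ge0 => //; rewrite subr_ge0 ltW|exact: ltW].
- by move=> z; rewrite ltW ?lap_gt0.
- by move=> z; rewrite ltW ?lap_gt0.
rewrite -PE -QE -!EFinM -EFinD lee_fin le_eqVlt; apply/orP; left; apply/eqP.
rewrite -/U -/V; field; rewrite ?gt_eqF //.
Qed.

Lemma lap_pair_pt (z1 z2 y : R) :
  (expR (- al * `|z1 - z2| / b) * L (y - z2) <=
   L (y - z1) `^ al * L (y - z2) `^ (1 - al))%R.
Proof.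
set l2 := L (y - z2).
have l20 : (0 < l2)%R by exact: (@lap_gt0 R b b0).
have h := @lap_shift R b b0 y z1 z2.
have h' := ge0_ler_powR (ltW al0) (x := (l2 * expR (- `|z1 - z2| / b))%R) (y := L (y - z1)).
rewrite !nnegrE in h'.
have {}h' := h' (mulr_ge0 (ltW l20) (expR_ge0 _)) (ltW (@lap_gt0 R b b0 _)) h.
apply: le_trans (ler_wpM2r (powR_ge0 _ _) h').
rewrite powRM ?expR_ge0 ?(ltW l20) //.
rewrite [X in (_ <= X)%R]mulrAC -(powRD (x := l2)); last by apply/implyP => _; rewrite gt_eqF.
have -> : (al + (1 - al) = 1)%R by rewrite addrC subrK.
rewrite powRr1 ?(ltW l20) // [X in (_ <= X)%R]mulrC.
rewrite /powR gt_eqF ?expR_gt0 // expRK.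
by rewrite (_ : (- al * `|z1 - z2| / b = al * (- `|z1 - z2| / b))%R) //; ring.
Qed.

Lemma lap_pair (z : R * R) :
  (expR (- al * `|z.1 - z.2| / b))%:E <=
  \int[mu]_y (L (y - z.1) `^ al * L (y - z.2) `^ (1 - al))%:E.
Proof.
set e := expR (- al * `|z.1 - z.2| / b)%R.
have h1 : \int[mu]_y (L (y - z.2))%:E = 1 by exact: (@lap_int R b b0 z.2).
apply: (le_trans (y := \int[mu]_y (e%:E * (L (y - z.2))%:E))).
  rewrite ge0_integralZl_EFin; last 4 first.
  - exact: measurableT.
  - by move=> y _; rewrite lee_fin ltW // (@lap_gt0 R b b0).
  - apply/measurable_EFinP; apply: measurableT_comp; [exact: lap_meas|exact: measurable_funB].
  - exact: expR_ge0.
  by rewrite h1 mule1.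
apply: ge0_le_integral => //.
- by move=> y _; rewrite -EFinM lee_fin mulr_ge0 ?expR_ge0 // ltW // (@lap_gt0 R b b0).
- apply/measurable_EFinP; apply: measurable_funM => //.
  apply: measurableT_comp; [exact: lap_meas|exact: measurable_funB].
- apply/measurable_EFinP; apply: measurable_funM.
    apply: measurableT_comp (measurable_powR _) _.
    by apply: measurableT_comp; [exact: lap_meas|exact: measurable_funB].
  apply: measurableT_comp (measurable_powR _) _.
  by apply: measurableT_comp; [exact: lap_meas|exact: measurable_funB].
- by move=> y _; rewrite lee_fin lap_pair_pt.
Qed.

Let f3 (w : measurableTypeR R * (R * R)) : \bar R :=
  (L (w.1 - w.2.1) `^ al * L (w.1 - w.2.2) `^ (1 - al))%:E.

Let mf3 : measurable_fun setT f3.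
Proof.
apply/measurable_EFinP; apply: measurable_funM.
  apply: measurableT_comp (measurable_powR _) _.
  apply: measurableT_comp; first exact: lap_meas.
  apply: measurable_funB; first exact: measurable_fst.
  exact: measurableT_comp measurable_fst measurable_snd.
apply: measurableT_comp (measurable_powR _) _.
apply: measurableT_comp; first exact: lap_meas.
apply: measurable_funB; first exact: measurable_fst.
exact: measurableT_comp measurable_snd measurable_snd.
Qed.

Let f30 w : 0 <= f3 w.
Proof. by rewrite lee_fin mulr_ge0 ?powR_ge0. Qed.

Lemma measP : measurable_fun (setT : set (measurableTypeR R)) (conv_density L p).
Proof.
apply/measurable_EFinP.
have -> : EFin \o conv_density L p = fubini_F pi (fun w : measurableTypeR R * (R * R) => (L (w.1 - w.2.1))%:E).
  by apply/funext => y /=; rewrite PE.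
apply: measurable_fun_fubini_tonelli_F.
- apply/measurable_EFinP; apply: measurableT_comp; first exact: lap_meas.
  apply: measurable_funB; first exact: measurable_fst.
  exact: measurableT_comp measurable_fst measurable_snd.
- by move=> w; rewrite lee_fin ltW // (@lap_gt0 R b b0).
Qed.

Lemma measQ : measurable_fun (setT : set (measurableTypeR R)) (conv_density L q).
Proof.
apply/measurable_EFinP.
have -> : EFin \o conv_density L q = fubini_F pi (fun w : measurableTypeR R * (R * R) => (L (w.1 - w.2.2))%:E).
  by apply/funext => y /=; rewrite QE.
apply: measurable_fun_fubini_tonelli_F.
- apply/measurable_EFinP; apply: measurableT_comp; first exact: lap_meas.
  apply: measurable_funB; first exact: measurable_fst.
  exact: measurableT_comp measurable_snd measurable_snd.
- by move=> w; rewrite lee_fin ltW // (@lap_gt0 R b b0).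
Qed.

Lemma main_ineq :
  \int[pi]_z (expR (- al * `|z.1 - z.2| / b))%:E <=
  \int[mu]_y ((conv_density L p y) `^ al * (conv_density L q y) `^ (1 - al))%:E.
Proof.
apply: (le_trans (y := \int[pi]_z \int[mu]_y f3 (y, z))).
  apply: ge0_le_integral => //.
  - apply/measurable_EFinP; apply: measurableT_comp; first exact: measurable_expR.
    apply: measurable_funM => //; apply: measurable_funM => //.
    apply: measurableT_comp; first exact: normr_measurable.
    exact: measurable_funB.
  - exact: (measurable_fun_fubini_tonelli_G (m1 := mu) f3 mf3 f30).
  - by move=> z _; exact: lap_pair.
rewrite -(fubini_tonelli f3 mf3 f30).
apply: ge0_le_integral => //.
- by move=> y _; apply: integral_ge0 => z _; exact: f30.
- exact: (measurable_fun_fubini_tonelli_F (m2 := pi) f3 mf3 f30).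
- apply/measurable_EFinP; apply: measurable_funM.
    exact: measurableT_comp (measurable_powR _) measP.
  exact: measurableT_comp (measurable_powR _) measQ.
- by move=> y _; exact: jensen_y.
Qed.

End main.

Theorem proposition1 (R : realType) (Secret Prior : Type)
    (PX : Secret -> Prior -> R -> R)
    (alpha eps b : R) (rho : Prior) (si sj : Secret)
    (pi : probability (R * R)%type R) :
  0 < alpha < 1 -> 0 < eps -> 0 < b ->
  (forall s r, is_density (PX s r)) ->
  is_coupling pi (PX si rho) (PX sj rho) ->
  (\int[pi]_z (expR (- alpha * `|z.1 - z.2| / b))%:E >=
     (expR ((alpha - 1) * eps))%:E)%E ->
  renyi_div alpha (conv_density (lap_density b) (PX si rho))
                  (conv_density (lap_density b) (PX sj rho)) <= eps.
Proof.
move=> /andP[al0 al1] eps0 b0 dens cpl hyp.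
have := @main_ineq R alpha b pi _ _ al0 al1 b0 cpl (dens si rho) (dens sj rho).
move/(le_trans hyp) => hJ.
rewrite /renyi_div /Rintegral.
set J := (\int[_]_(x in _) _)%E in hJ *.
have [Joo|Jnoo] := eqVneq J +oo%E.
  by rewrite Joo /= ln0 // mulr0 ltW.
have J0 : (0 <= J)%E by apply: le_trans hJ; rewrite lee_fin expR_ge0.
have Jf : J \is a fin_num by rewrite ge0_fin_numE // ltey.
have hI : expR ((alpha - 1) * eps) <= fine J by rewrite -lee_fin fineK.
have I0 : 0 < fine J by apply: lt_le_trans hI; exact: expR_gt0.
have hl : (alpha - 1) * eps <= ln (fine J).
  by rewrite -[X in X <= _]expRK ler_ln ?posrE ?expR_gt0.
have a1 : alpha - 1 < 0 by rewrite subr_lt0.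
rewrite -[leRHS](mulKf (ltr0_neq0 a1) eps).
by apply: ler_wnM2l => //; rewrite invr_le0 ltW.
Qed.
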